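(* For every positive integer $n$, $D''_n\equiv 0\pmod 3$.
   Context: For $n\in\mathbb{N}$, the Domb numbers are $D_n=\sum_{k=0}^n\binom{n}{k}^2\binom{2k}{k}\binom{2(n-k)}{n-k}$. For a sequence $(x_k)_{k\ge0}$, its binomial transform is $x'_n=\sum_{k=0}^n\binom{n}{k}x_k$; $D'_n=\sum_{k=0}^n\binom nk D_k$ and $D''_n=\sum_{k=0}^n\binom{n}{k}D'_k$. *)

(* Defs.v *)
From mathcomp Require Import all_boot.
Set Implicit Arguments. Unset Strict Implicit. Unset Printing Implicit Defensive.

Definition domb (n : nat) : nat :=
  \sum_(0 <= k < n.+1) 'C(n, k) ^ 2 * 'C(2 * k, k) * 'C(2 * (n - k), n - k).

Definition binom_transform (x : nat -> nat) (n : nat) : nat :=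
  \sum_(0 <= k < n.+1) 'C(n, k) * x k.

Definition domb' : nat -> nat := binom_transform domb.
Definition domb'' : nat -> nat := binom_transform domb'.

(* Main.v *)
Require Import Defs.
From mathcomp Require Import all_boot.
From mathcomp Require Import zify.

Lemma m3 p m : 3 * p + m = m %[mod 3].
Proof. by rewrite mulnC modnMDl. Qed.

Lemma binS3 n k : 'C(n.+3, k.+3) = 'C(n,k) + 3*('C(n,k.+1)+'C(n,k.+2)) + 'C(n,k.+3).
Proof. rewrite !binS; lia. Qed.

Lemma binS3s n k : k < 3 -> 'C(n.+3, k) = 'C(n,k) %[mod 3].
Proof.
case: k => [|[|[|k]]] // _; first by rewrite !bin0.
  by rewrite !bin1 -addn3 modnDr.
rewrite !binS !bin1 !bin0.
have -> : 'C(n, 2) + n + (n + 1) + (n + 1 + 1) = 'C(n,2) + 3 * (n + 1) by lia.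
by rewrite addnC m3.
Qed.

Lemma lucas3 m j a b : a < 3 -> b < 3 ->
  'C(3*m+a, 3*j+b) = 'C(m,j)*'C(a,b) %[mod 3].
Proof.
move=> ha hb; elim: m j => [|m IH] j.
  case: j => [|j]; first by rewrite !muln0 !add0n bin0 mul1n.
  by rewrite bin_small ?bin0n //; lia.
have -> : 3 * m.+1 + a = (3*m+a).+3 by lia.
case: j => [|j].
  rewrite muln0 add0n binS3s // -(add0n b) -(muln0 3) IH.
  by rewrite !bin0.
have -> : 3 * j.+1 + b = (3*j+b).+3 by lia.
rewrite binS3.
rewrite -addnA addnCA m3.
have -> : (3 * j + b).+3 = 3 * j.+1 + b by lia.
rewrite -modnDm !IH modnDm.
by rewrite binS mulnDl addnC.
Qed.

Lemma modM x y x' y' : x = x' %[mod 3] -> y = y' %[mod 3] -> x*y = x'*y' %[mod 3].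
Proof. by move=> h1 h2; rewrite -modnMm h1 h2 modnMm. Qed.

Lemma cb3 j b : b < 3 -> 'C(2*(3*j+b), 3*j+b) = 'C(2*j,j)*'C(2*b,b) %[mod 3].
Proof.
case: b => [|[|[|b]]] // _.
- have -> : 2 * (3 * j + 0) = 3 * (2 * j) + 0 by lia.
  by rewrite lucas3.
- have -> : 2 * (3 * j + 1) = 3 * (2 * j) + 2 by lia.
  by rewrite lucas3.
- have -> : 2 * (3 * j + 2) = 3 * (2 * j + 1) + 1 by lia.
  rewrite lucas3 //.
  have -> : 'C(1,2) = 0 by [].
  have -> : 'C(2*2,2) = 2*3 by [].
  by rewrite muln0 mulnA modnMl mod0n.
Qed.

Definition T n k := 'C(n, k) ^ 2 * 'C(2 * k, k) * 'C(2 * (n - k), n - k).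

Lemma T3 m r j b : r < 3 -> b < 3 ->
  T (3*m+r) (3*j+b) = T m j * T r b %[mod 3].
Proof.
move=> hr hb.
case: (boolP ((j <= m) && (b <= r))) => [/andP[hj hb'] | hn].
  rewrite {1}/T.
  have -> : 3 * m + r - (3 * j + b) = 3 * (m - j) + (r - b) by lia.
  have -> : T m j * T r b = ('C(m,j) * 'C(r,b))^2 * ('C(2*j,j)*'C(2*b,b))
      * ('C(2*(m-j),m-j) * 'C(2*(r-b),r-b)) by rewrite /T; lia.
  apply: modM; [apply: modM|].
  - by rewrite !expnS !expn0 !muln1; apply: modM; rewrite lucas3.
  - by rewrite cb3.
  - by rewrite cb3 //; lia.
have h0 : 'C(m, j) * 'C(r, b) = 0.
  case/nandP: hn; rewrite -ltnNge => h.
    by rewrite bin_small.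
  by rewrite (bin_small h) muln0.
have -> : T m j * T r b = 0.
  have -> : T m j * T r b = ('C(m,j) * 'C(r,b))^2 * ('C(2*j,j)*'C(2*b,b))
      * ('C(2*(m-j),m-j) * 'C(2*(r-b),r-b)) by rewrite /T; lia.
  by rewrite h0.
have hc : 'C(3 * m + r, 3 * j + b) %% 3 = 0 by rewrite lucas3 // h0.
have -> : T (3 * m + r) (3 * j + b) = 'C(3 * m + r, 3 * j + b) *
  ('C(3 * m + r, 3 * j + b) * 'C(2 * (3 * j + b), 3 * j + b) *
    'C(2 * (3 * m + r - (3 * j + b)), 3 * m + r - (3 * j + b))) by rewrite /T; lia.
by rewrite -modnMml hc.
Qed.

Lemma sum3 (F : nat -> nat) M :
  \sum_(0 <= k < 3*M) F k = \sum_(0 <= j < M) (F (3*j) + F (3*j+1) + F (3*j+2)).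
Proof.
elim: M => [|M IH]; first by rewrite muln0 !big_geq.
have -> : 3 * M.+1 = (3*M).+2.+1 by lia.
rewrite !big_nat_recr //= IH.
by rewrite addn1 addn2 !addnA.
Qed.

Lemma modD x y x' y' : x = x' %[mod 3] -> y = y' %[mod 3] -> x+y = x'+y' %[mod 3].
Proof. by move=> h1 h2; rewrite -modnDm h1 h2 modnDm. Qed.

Lemma domb_ext n M : n < 3*M -> domb n = \sum_(0<=k<3*M) T n k.
Proof.
move=> h.
have -> : \sum_(0<=k<3*M) T n k = \sum_(0<=k<n.+1) T n k + \sum_(n.+1<=k<3*M) T n k.
  by rewrite (@big_cat_nat _ _ _ n.+1).
rewrite (_ : \sum_(n.+1 <= k < 3*M) T n k = 0) ?addn0 //.
rewrite big_nat_cond big1 // => k /andP[/andP[hk _] _].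
by rewrite /T bin_small.
Qed.

Lemma Ssum r : r < 3 -> T r 0 + T r 1 + T r 2 = 1 %[mod 3].
Proof. by case: r => [|[|[|r]]]. Qed.

Lemma domb3 m r : r < 3 -> domb (3*m+r) = domb m %[mod 3].
Proof.
move=> hr; rewrite (@domb_ext _ m.+1); last by lia.
rewrite sum3 -modn_summ.
rewrite (eq_bigr (fun j => (T m j * (T r 0 + T r 1 + T r 2)) %% 3)); last first.
  move=> j _; rewrite !mulnDr; apply: modD; [apply: modD|].
  - by rewrite -(addn0 (3*j)) T3.
  - by rewrite T3.
  - by rewrite T3.
rewrite modn_summ -big_distrl /= -modnMm Ssum // modnMm muln1.
by [].
Qed.

Lemma domb1 n : domb n = 1 %[mod 3].
Proof.
elim/ltn_ind: n => n IH.
change (domb n %% 3 = 1 %% 3).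
case: (posnP n) => [->|hn]; first by rewrite /domb big_nat_recr //= big_geq.
have -> : domb n = domb (3 * (n %/ 3) + n %% 3) by rewrite mulnC -divn_eq.
rewrite domb3 ?ltn_mod // IH //.
by rewrite ltn_Pdiv.
Qed.

Lemma bt_mod x y n : (forall k, x k = y k %[mod 3]) ->
  binom_transform x n = binom_transform y n %[mod 3].
Proof.
move=> h; rewrite /binom_transform -modn_summ -[RHS]modn_summ.
by congr (_ %% 3); apply: eq_bigr => k _; rewrite -modnMmr h modnMmr.
Qed.

Lemma bt_pow c n : binom_transform (fun k => c^k) n = (c.+1)^n.
Proof.
rewrite /binom_transform big_mkord -[c.+1]add1n expnDn.
by apply: eq_bigr => i _; rewrite exp1n mul1n.
Qed.

Theorem lemma3p4 (n : nat) : 0 < n -> domb'' n = 0 %[mod 3].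
Proof.
move=> hn.
have h1 : forall k, domb' k = 2 ^ k %[mod 3].
  move=> k; rewrite /domb' -(bt_pow 1); apply: bt_mod => i.
  by rewrite domb1 exp1n.
rewrite /domb'' (@bt_mod _ _ n h1) bt_pow.
case: n hn => // n _.
by rewrite expnS modnMr.
Qed.
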